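(* Let $\Omega=\{\omega_1,\dots,\omega_n\}$ be a finite set of bids, let $u:\Omega\to[0,1]$ be a utility function, let $a:\Omega\to[0,1]$ be a (static) acceptance-probability function, let $\mathit{rv}$ be a real number (the reservation value), and let $D\le n$ be a positive integer (the deadline). For a finite sequence $\pi=(x_1,\dots,x_k)$ of elements of $\Omega$, writing $u_i=u(x_i)$ and $a_i=a(x_i)$, define $$EU_{\mathit{rv}}(\pi)=\sum_{i=1}^{k} u_i\, a_i\prod_{j=1}^{i-1}(1-a_j)+\mathit{rv}\cdot\prod_{j=1}^{k}(1-a_j).$$ Consider the algorithm MIA-RVelous: for $k=1,\dots,D$ in turn, choose $$x_k\in\operatorname{argmax}_{\omega\in\Omega\setminus\{x_1,\dots,x_{k-1}\}} EU_{\mathit{rv}}\big(\mathrm{sort}(\{x_1,\dots,x_{k-1},\omega\})\big),$$ and finally output $\pi^*=\mathrm{sort}(\{x_1,\dots,x_D\})$, where $\mathrm{sort}(S)$ denotes the sequence of the elements of a set $S\subseteq\Omega$ arranged in order of decreasing utility $u$. Then the output $\pi^*$ is an optimal bid sequence, i.e. $$\pi^*\in\operatorname{argmax}_{\pi\in\Omega^{D}} EU_{\mathit{rv}}(\pi).$$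
   Context: Setting: bilateral negotiation under the alternating offers protocol, from the perspective of one agent who plans a whole sequence of bids $\pi=(x_1,\dots,x_k)$ in advance. Each bid $x_i$ is accepted by the opponent with probability $a(x_i)$, independently of time (static acceptance model); if accepted the agent receives utility $u(x_i)$, and if all bids are rejected by the deadline $D$ the agent receives the reservation value $\mathit{rv}$. $EU_{\mathit{rv}}(\pi)$ is the resulting expected utility. $\Omega^D$ is the set of all sequences of length $D$ of elements of $\Omega$. *)

(* Defs.v *)
From HB Require Import structures.
From mathcomp Require Import all_boot all_order all_algebra.
Set Implicit Arguments. Unset Strict Implicit. Unset Printing Implicit Defensive.
Import Order.TTheory GRing.Theory Num.Theory.
Local Open Scope ring_scope.

Definition EU (R : realFieldType) (T : Type) (u a : T -> R) (rv : R) (pi : seq T) : R :=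
  let us := map u pi in
  let as_ := map a pi in
  \sum_(i < size pi) (nth 0 us i * nth 0 as_ i * \prod_(j < i) (1 - nth 0 as_ j))
  + rv * \prod_(j < size pi) (1 - nth 0 as_ j).

Definition usort (R : realFieldType) (T : Type) (u : T -> R) (s : seq T) : seq T :=
  sort (fun x y => u y <= u x) s.

(* Main.v *)
Require Import Defs.
From HB Require Import structures.
From mathcomp Require Import all_boot all_order all_algebra.
From mathcomp Require Import ring lra.
Set Implicit Arguments. Unset Strict Implicit. Unset Printing Implicit Defensive.
Import Order.TTheory GRing.Theory Num.Theory.
Local Open Scope ring_scope.

Definition fz (R : realFieldType) (T : Type) (u a : T -> R) (z : T) (x : R) : R :=
  a z * u z + (1 - a z) * x.

Lemma EU_nil (R : realFieldType) (T : Type) (u a : T -> R) (rv : R) :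
  EU u a rv [::] = rv.
Proof. by rewrite /EU /= big_ord0 big_ord0 add0r mulr1. Qed.

Lemma EU_cons (R : realFieldType) (T : Type) (u a : T -> R) (rv : R) x s :
  EU u a rv (x :: s) = fz u a x (EU u a rv s).
Proof.
rewrite /fz /EU /= big_ord_recl big_ord_recl /= big_ord0 mulr1.
under eq_bigr => i _ do rewrite big_ord_recl /=.
rewrite mulrDr mulrA big_distrr /=.
have -> : \sum_(i < size s)
     [seq u i | i <- s]`_(0 + i) * [seq a i | i <- s]`_(0 + i) *
     ((1 - a x) * \prod_(i0 < i) (1 - [seq a i | i <- s]`_(0 + i0))) = 
   \sum_(i < size s)
      (1 - a x) *
      ([seq u i | i <- s]`_i * [seq a i | i <- s]`_i *
       \prod_(j < i) (1 - [seq a i | i <- s]`_j)).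
  by apply: eq_bigr => i _; rewrite mulrCA.
have -> : \prod_(i < size s) (1 - [seq a i | i <- s]`_(0 + i)) = 
  \prod_(j < size s) (1 - [seq a i | i <- s]`_j) by [].
ring.
Qed.

Lemma fz_mono (R : realFieldType) (T : Type) (u a : T -> R) z x y :
  a z <= 1 -> x <= y -> fz u a z x <= fz u a z y.
Proof. by move=> h1 hxy; rewrite /fz lerD2l ler_wpM2l // subr_ge0. Qed.

Lemma fz_swap (R : realFieldType) (T : Type) (u a : T -> R) x y E :
  0 <= a x -> 0 <= a y -> u x <= u y ->
  fz u a x (fz u a y E) <= fz u a y (fz u a x E).
Proof.
move=> h1 h2 h3; rewrite /fz.
have : 0 <= a x * a y * (u y - u x) by rewrite mulr_ge0 ?mulr_ge0 // subr_ge0.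
move=> h; rewrite -subr_ge0; apply: le_trans h _; rewrite le_eqVlt; apply/orP; left.
apply/eqP; ring.
Qed.

Lemma EU_insert (R : realFieldType) (T : Type) (u a : T -> R) (rv : R)
  (ha : forall w, 0 <= a w <= 1) x s1 s2 :
  all (fun y => u x <= u y) s1 ->
  fz u a x (EU u a rv (s1 ++ s2)) <= EU u a rv (s1 ++ x :: s2).
Proof.
elim: s1 => [|y s1 IH] /=; first by rewrite EU_cons.
case/andP=> hy hall; rewrite !EU_cons.
have [hy0 hy1] := andP (ha y); have [hx0 hx1] := andP (ha x).
apply: le_trans (fz_swap _ hx0 hy0 hy) _.
by apply: fz_mono => //; apply: IH.
Qed.

Lemma EU_sorted_max (R : realFieldType) (T : eqType) (u a : T -> R) (rv : R)
  (ha : forall w, 0 <= a w <= 1) (p s : seq T) :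
  perm_eq p s -> sorted (fun x y => u y <= u x) s -> EU u a rv p <= EU u a rv s.
Proof.
have rtr : transitive (fun x y : T => u y <= u x).
  by move=> y x z h1 h2; apply: le_trans h2 h1.
elim: p s => [|x p IH] s hps hs.
  by rewrite perm_sym in hps; move/perm_nilP: hps => ->.
have xs : x \in s by rewrite -(perm_mem hps) mem_head.
case/splitPr: xs hps hs => s1 s2 hps hs.
have hp' : perm_eq p (s1 ++ s2).
  by rewrite -(perm_cons x); apply: perm_trans hps _; by rewrite (perm_catCA s1 [:: x] s2).
rewrite sorted_pairwise // pairwise_cat in hs.
case/and3P: hs => hrel hp1 hp2.
have hs' : sorted (fun x y => u y <= u x) (s1 ++ s2).
  rewrite sorted_pairwise // pairwise_cat hp1 /=.
  move: hp2 => /= /andP [_ ->]; rewrite andbT.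
  move/allrelP: (hrel) => hr.
  apply/allrelP => y z hy hz; apply: hr => //; by rewrite inE hz orbT.
rewrite EU_cons.
have [hx0 hx1] := andP (ha x).
apply: le_trans (@fz_mono _ _ u a x _ _ hx1 (IH _ hp' hs')) _.
apply: EU_insert => //.
move/allrelP: (hrel) => hr.
apply/allP => y hy; apply: hr => //; exact: mem_head.
Qed.

Lemma real_P (R : realFieldType) (a u q c x0 x1 : R) :
  0 <= a -> a <= 1 -> 0 <= q -> q <= 1 -> (1 - q) * u <= c ->
  a * u + (1 - a) * x0 <= q * x0 + c ->
  a * u + (1 - a) * x0 <= x1 -> x1 <= q * x0 + c ->
  a * u + (1 - a) * x1 <= q * x1 + c.
Proof. move=> *; nra. Qed.

Lemma real_swap (R : realFieldType) (a u q c x : R) :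
  0 <= a -> (1 - q) * u <= c ->
  a * u + (1 - a) * (q * x + c) <= q * (a * u + (1 - a) * x) + c.
Proof. move=> *; nra. Qed.

Lemma real_conj1 (R : realFieldType) (a u q c x y : R) :
  0 < 1 - a ->
  a * u + (1 - a) * y <= q * (a * u + (1 - a) * x) + c ->
  y <= q * x + (q * a * u + c - a * u) / (1 - a).
Proof.
move=> h1 h2.
set d := (q * a * u + c - a * u) / (1 - a).
have hd : d * (1 - a) = q * a * u + c - a * u by rewrite /d divfK // gt_eqF.
nra.
Qed.

Lemma real_conj2 (R : realFieldType) (a u q c x y : R) :
  0 < 1 - a ->
  y <= q * x + (q * a * u + c - a * u) / (1 - a) ->
  a * u + (1 - a) * y <= q * (a * u + (1 - a) * x) + c.
Proof.
move=> h1 h2.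
move: h2; set d := (q * a * u + c - a * u) / (1 - a) => h2.
have hd : d * (1 - a) = q * a * u + c - a * u by rewrite /d divfK // gt_eqF.
nra.
Qed.

Lemma real_conj3 (R : realFieldType) (a u q c : R) :
  0 < 1 - a -> q <= 1 -> (1 - q) * u <= c ->
  (1 - q) * u <= (q * a * u + c - a * u) / (1 - a).
Proof.
move=> h1 h2 h3.
set d := (q * a * u + c - a * u) / (1 - a).
have hd : d * (1 - a) = q * a * u + c - a * u by rewrite /d divfK // gt_eqF.
nra.
Qed.

Fixpoint Mv (R : realFieldType) (T : Type) (u a : T -> R) (rv : R) (L : seq T) (k : nat) : R :=
  match L with
  | [::] => rv
  | z :: L' => match k with
     | 0 => rv
     | k'.+1 => if (k'.+1 <= size L')%N
                then Num.max (Mv u a rv L' k'.+1) (fz u a z (Mv u a rv L' k'))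
                else fz u a z (Mv u a rv L' k')
     end
  end.

Lemma Mv0 (R : realFieldType) (T : Type) (u a : T -> R) (rv : R) L :
  Mv u a rv L 0 = rv.
Proof. by case: L. Qed.

Lemma Mv_cons_ge (R : realFieldType) (T : Type) (u a : T -> R) (rv : R) z L k :
  (k <= size L)%N -> Mv u a rv L k <= Mv u a rv (z :: L) k.
Proof.
case: k => [|k] hk; first by rewrite !Mv0.
by rewrite /= hk le_max lexx.
Qed.

Lemma Mv_cons_f (R : realFieldType) (T : Type) (u a : T -> R) (rv : R) z L k :
  fz u a z (Mv u a rv L k) <= Mv u a rv (z :: L) k.+1.
Proof. by rewrite /=; case: ifP => _ //; rewrite le_max lexx orbT. Qed.

Lemma sorted_cons_le (R : realFieldType) (T : eqType) (u : T -> R) z (L : seq T) :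
  sorted (fun x y => u y <= u x) (z :: L) ->
  sorted (fun x y => u y <= u x) L /\ (forall y, y \in L -> u y <= u z).
Proof.
have rtr : transitive (fun x y : T => u y <= u x).
  by move=> y x w h1 h2; apply: le_trans h2 h1.
move=> /=; rewrite path_sortedE // => /andP [hall hs]; split => // y hy.
exact: (allP hall y hy).
Qed.

Lemma Lline (R : realFieldType) (T : eqType) (u a : T -> R) (rv : R)
  (ha : forall w, 0 <= a w <= 1) (L : seq T) :
  forall t q c k, sorted (fun x y => u y <= u x) L -> (forall y, y \in L -> u y <= t) ->
  0 <= q -> q <= 1 -> (1 - q) * t <= c -> (k.+2 <= size L)%N ->
  Mv u a rv L k.+1 <= q * Mv u a rv L k + c ->
  Mv u a rv L k.+2 <= q * Mv u a rv L k.+1 + c.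
Proof.
elim: L => [|z L' IH] t q c k hs ht hq0 hq1 hc hk hyp; first by [].
have [hs' hzL'] := sorted_cons_le hs.
have htz : u z <= t by apply: ht; exact: mem_head.
have ht' : forall y, y \in L' -> u y <= t.
  by move=> y hy; apply: ht; rewrite inE hy orbT.
have hk' : (k.+1 <= size L')%N by [].
have [ha0 ha1] := andP (ha z).
set m := Mv u a rv L' in hyp *.
set f := fz u a z in hyp *.
have hcz : (1 - q) * u z <= c.
  apply: le_trans hc; apply: ler_wpM2l; last by [].
  by rewrite subr_ge0.
have IHf : forall j, (j.+2 <= size L')%N -> m j.+1 <= f (m j) -> m j.+2 <= f (m j.+1).
  move=> j hj h.
  have := IH (u z) (1 - a z) (a z * u z) j hs' hzL'.
  rewrite subr_ge0 ha1 /f /fz.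
  have -> : 1 - (1 - a z) = a z by ring.
  move=> H; rewrite addrC; apply: H => //; [lra | by rewrite addrC].
have E1 : Mv u a rv (z :: L') k.+1 = Num.max (m k.+1) (f (m k)) by rewrite /= hk'.
have E2 : Mv u a rv (z :: L') k.+2 =
   if (k.+2 <= size L')%N then Num.max (m k.+2) (f (m k.+1)) else f (m k.+1) by [].
rewrite E1 in hyp; rewrite E2 E1.
have case2 : Mv u a rv (z :: L') k = m k -> 
   (if (k.+2 <= size L')%N then Num.max (m k.+2) (f (m k.+1)) else f (m k.+1))
      <= q * Num.max (m k.+1) (f (m k)) + c.
  move=> hX0; rewrite hX0 ge_max in hyp; case/andP: hyp => h1 h2.
  have hA : f (m k.+1) <= q * Num.max (m k.+1) (f (m k)) + c.
    case/orP: (le_total (m k.+1) (f (m k))) => hc2.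
      rewrite (max_idPr hc2).
      apply: le_trans (real_swap (m k) ha0 hcz).
      exact: fz_mono.
    rewrite (max_idPl hc2).
    exact: (real_P ha0 ha1 hq0 hq1 hcz h2 hc2 h1).
  case: ifP => hk2 //; rewrite ge_max hA andbT.
  apply: le_trans (IH t q c k hs' ht' hq0 hq1 hc hk2 h1) _.
  by rewrite lerD2r ler_wpM2l // le_max lexx.
case: k hk hk' hyp E1 E2 case2 => [|k'] hk hk' hyp E1 E2 case2.
  by apply: case2; rewrite /m !Mv0.
have EX0 : Mv u a rv (z :: L') k'.+1 = Num.max (m k'.+1) (f (m k')).
  by rewrite /= (ltnW hk').
case/orP: (le_total (f (m k')) (m k'.+1)) => hc1.
  by apply: case2; rewrite EX0 (max_idPl hc1).
rewrite EX0 (max_idPr hc1) in hyp.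
have h1 : m k'.+2 <= f (m k'.+1) by apply: IHf.
rewrite (max_idPr h1) in hyp *.
have -> : (if (k'.+3 <= size L')%N then Num.max (m k'.+3) (f (m k'.+2)) else f (m k'.+2))
   = f (m k'.+2).
  case: ifP => // hk3; apply/max_idPr; exact: IHf.
case: (ltrP (a z) 1) => haz.
  have hpos : 0 < 1 - a z by rewrite subr_gt0.
  have := real_conj1 hpos hyp => hyp'.
  have := IH (u z) q _ k' hs' hzL' hq0 hq1 (real_conj3 hpos hq1 hcz) hk' hyp'.
  exact: real_conj2.
have haz1 : a z = 1 by apply/le_anti; rewrite ha1 haz.
rewrite /f /fz haz1 !subrr !mul0r !addr0 !mul1r.
nra.
Qed.

Definition W (R : realFieldType) (T : eqType) (u a : T -> R) (rv : R) (L G : seq T) : R :=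
  EU u a rv [seq x <- L | x \in G].

Lemma M1 (R : realFieldType) (T : eqType) (u a : T -> R) (rv : R)
  (ha : forall w, 0 <= a w <= 1) (L G : seq T) :
  W u a rv L G <= Mv u a rv L (size [seq x <- L | x \in G]).
Proof.
elim: L => [|z L' IH]; first by rewrite /W /= EU_nil.
rewrite /W /=; case: ifP => hz /=.
  rewrite EU_cons; apply: le_trans (@Mv_cons_f _ _ u a rv z L' _).
  have [_ h1] := andP (ha z); exact: fz_mono.
apply: le_trans IH _; apply: Mv_cons_ge.
by rewrite size_filter count_size.
Qed.

Lemma filter_cons_notin (T : eqType) (L G : seq T) z :
  z \notin L -> [seq x <- L | x \in z :: G] = [seq x <- L | x \in G].
Proof.
move=> hz; apply: eq_in_filter => x hx; rewrite inE.
have -> : (x == z) = false by apply/eqP => e; move: hz; rewrite -e hx.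
by [].
Qed.

Lemma greedy_step (R : realFieldType) (T : eqType) (u a : T -> R) (rv : R)
  (ha : forall w, 0 <= a w <= 1) (L : seq T) :
  sorted (fun x y => u y <= u x) L -> uniq L ->
  forall G k, size [seq x <- L | x \in G] = k -> (k < size L)%N ->
  W u a rv L G = Mv u a rv L k ->
  exists w, [/\ w \in L, w \notin G & W u a rv L (w :: G) = Mv u a rv L k.+1].
Proof.
elim: L => [|z L' IH] hs hu G k hsz hk hW; first by [].
have [hs' hzL'] := sorted_cons_le hs.
case/andP: hu => hzn hu'.
have [ha0 ha1] := andP (ha z).
set m := Mv u a rv L' in IH *.
set f := fz u a z.
case hzG: (z \in G).
- move: hsz hW; rewrite /W /= hzG /= EU_cons => hsz hW.
  case: k hsz hk hW => [|k'] hsz hk hW; first by [].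
  case: hsz => hsz.
  have hk' : (k'.+1 <= size L')%N by [].
  have EX : Mv u a rv (z :: L') k'.+1 = Num.max (m k'.+1) (f (m k')) by rewrite /= hk'.
  have hM1 := M1 u rv ha L' G; rewrite hsz in hM1.
  have hfW : f (W u a rv L' G) <= f (m k') by apply: fz_mono.
  rewrite hk' in hW; change (f (W u a rv L' G) = Num.max (m k'.+1) (f (m k'))) in hW.
  have hfe : f (W u a rv L' G) = f (m k').
    apply/le_anti; rewrite hfW /= -/(W u a rv L' G) hW le_max lexx orbT //.
  have h1 : m k'.+1 <= f (m k').
    by rewrite -hfe -/(W u a rv L' G) hW le_max lexx.
  have EX2 : Mv u a rv (z :: L') k'.+2 = f (m k'.+1).
    rewrite /=; case: ifP => // hk2; apply/max_idPr.
    have := Lline (rv := rv) ha (t := u z) (q := 1 - a z) (c := a z * u z) hs' hzL'.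
    rewrite subr_ge0 ha1 /f /fz.
    have -> : 1 - (1 - a z) = a z by ring.
    move=> H; rewrite addrC; apply: H => //; [lra | by rewrite addrC].
  case: (ltrP (a z) 1) => haz.
    have hpos : 0 < 1 - a z by rewrite subr_gt0.
    have hWe : W u a rv L' G = m k'.
      move: hfe; rewrite /f /fz => /addrI /mulfI; apply; exact: lt0r_neq0.
    have [w [hw1 hw2 hw3]] := IH hs' hu' G k' hsz hk' hWe.
    exists w; split => //; first by rewrite inE hw1 orbT.
    rewrite inE hzG orbT /= EU_cons.
    change (f (W u a rv L' (w :: G)) = Mv u a rv (z :: L') k'.+2).
    by rewrite EX2 hw3.
  have haz1 : a z = 1 by apply/le_anti; rewrite ha1 haz.
  have hf : forall x y, f x = f y by move=> x y; rewrite /f /fz haz1 subrr !mul0r.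
  have : ~~ all (fun x => x \in G) (z :: L').
    apply/negP => /all_filterP hall.
    by move: hk; rewrite -[in X in (_ < X)%N]hall /= hzG /= hsz ltnn.
  case/allPn => w hw hwG; exists w; split => //.
  rewrite inE hzG orbT /= EU_cons.
  change (f (W u a rv L' (w :: G)) = Mv u a rv (z :: L') k'.+2).
  by rewrite EX2; apply: hf.
- have hsz' : size [seq x <- L' | x \in G] = k by move: hsz; rewrite /= hzG.
  have hW2 : W u a rv L' G = Mv u a rv (z :: L') k by move: hW; rewrite /W /= hzG.
  clear hsz hW; rename hsz' into hsz; rename hW2 into hW.
  have hkL : (k <= size L')%N by rewrite -hsz size_filter count_size.
  have hM1 := M1 u rv ha L' G; rewrite hsz in hM1.
  have hWe : W u a rv L' G = m k.
    have hW' : W u a rv L' G = Mv u a rv (z :: L') k by exact: hW.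
    apply/le_anti; rewrite hM1 /= hW'; exact: Mv_cons_ge.
  have hzwitness : W u a rv (z :: L') (z :: G) = f (m k).
    rewrite /W /= inE eqxx /= EU_cons filter_cons_notin //.
    by rewrite -/(W u a rv L' G) hWe.
  have EX : Mv u a rv (z :: L') k.+1 =
     if (k.+1 <= size L')%N then Num.max (m k.+1) (f (m k)) else f (m k) by [].
  case: ifP EX => hk1 EX.
    case/orP: (le_total (f (m k)) (m k.+1)) => hc.
      have [w [hw1 hw2 hw3]] := IH hs' hu' G k hsz hk1 hWe.
      exists w; split => //; first by rewrite inE hw1 orbT.
      have hzw : (z \in w :: G) = false.
        by rewrite inE hzG orbF; apply/eqP => e; move: hzn; rewrite e hw1.
      by rewrite EX (max_idPl hc) /W /= hzw; exact: hw3.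
    exists z; split; first exact: mem_head.
      by rewrite hzG.
    by rewrite EX (max_idPr hc).
  exists z; split; first exact: mem_head.
    by rewrite hzG.
  by rewrite EX.
Qed.

Lemma bridge (R : realFieldType) (T : eqType) (u a : T -> R) (rv : R)
  (ha : forall w, 0 <= a w <= 1) (L G : seq T) :
  sorted (fun x y => u y <= u x) L -> uniq L -> (forall x, x \in L) -> uniq G ->
  EU u a rv (usort u G) = W u a rv L G /\ size [seq x <- L | x \in G] = size G.
Proof.
move=> hs huL hL hG.
have rtr : transitive (fun x y : T => u y <= u x).
  by move=> y x w h1 h2; apply: le_trans h2 h1.
have tot : total (fun x y : T => u y <= u x) by move=> x y; exact: le_total.
have hfs : sorted (fun x y => u y <= u x) [seq x <- L | x \in G] by exact: sorted_filter.
have hp : perm_eq [seq x <- L | x \in G] G.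
  apply: uniq_perm => //; first exact: filter_uniq.
  by move=> x; rewrite mem_filter hL andbT.
split; last exact: perm_size.
have hss : sorted (fun x y => u y <= u x) (usort u G) by exact: sort_sorted.
have hp2 : perm_eq (usort u G) G by rewrite /usort perm_sort.
apply/le_anti; apply/andP; split; apply: EU_sorted_max => //.
  by apply: perm_trans hp2 _; rewrite perm_sym.
by apply: perm_trans hp _; rewrite perm_sym.
Qed.

Theorem theorem1 (R : realFieldType) (T : finType) (u a : T -> R) (rv : R) (D : nat)
  (hu : forall w, 0 <= u w <= 1) (ha : forall w, 0 <= a w <= 1)
  (hD0 : (0 < D)%N) (hDn : (D <= #|T|)%N)
  (xs : seq T) (hsize : size xs = D) (huniq : uniq xs)
  (hgreedy : forall k : nat, (k < D)%N -> forall w : T, w \notin take k xs ->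
     EU u a rv (usort u (take k xs ++ [:: w])) <= EU u a rv (usort u (take k.+1 xs))) :
  let pistar := usort u xs in
  [/\ size pistar = D, uniq pistar &
      forall pi : seq T, size pi = D -> uniq pi -> EU u a rv pi <= EU u a rv pistar].
Proof.
move=> pistar.
set L := usort u (enum T).
have tot : total (fun x y : T => u y <= u x) by move=> x y; exact: le_total.
have hs : sorted (fun x y => u y <= u x) L by rewrite /L /usort; exact: sort_sorted.
have huL : uniq L by rewrite /L /usort sort_uniq enum_uniq.
have hL : forall x, x \in L by move=> x; rewrite /L /usort mem_sort mem_enum.
have hsL : size L = #|T| by rewrite /L /usort size_sort cardE.
have main : forall j, (j <= D)%N -> W u a rv L (take j xs) = Mv u a rv L j.
  elim => [|j IH] hj.
    rewrite /W take0; have -> : [seq x <- L | x \in [::]] = [::] by elim: (L).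
    by rewrite EU_nil Mv0.
  have hG : uniq (take j xs) by exact: take_uniq.
  have [_ hsz] := bridge rv ha hs huL hL hG.
  rewrite size_takel ?hsize ?(ltnW hj) // in hsz.
  have hjL : (j < size L)%N by rewrite hsL; apply: leq_trans hj hDn.
  have [w [hw1 hw2 hw3]] := greedy_step (rv := rv) ha hs huL hsz hjL (IH (ltnW hj)).
  have := hgreedy j hj w hw2.
  have hG2 : uniq (take j xs ++ [:: w]) by rewrite cat_uniq hG /= orbF (negbTE hw2).
  have [e1 _] := bridge rv ha hs huL hL hG2.
  have hG3 : uniq (take j.+1 xs) by exact: take_uniq.
  have [e2 hsz3] := bridge rv ha hs huL hL hG3.
  rewrite e1 e2.
  have -> : W u a rv L (take j xs ++ [:: w]) = W u a rv L (w :: take j xs).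
    rewrite /W; congr (EU _ _ _ _); apply: eq_filter => x.
    by rewrite mem_cat !inE orbC.
  rewrite hw3 => hle; apply/le_anti; rewrite hle andbT.
  have := M1 u rv ha L (take j.+1 xs).
  by rewrite hsz3 size_takel // hsize.
split.
- by rewrite /pistar /usort size_sort.
- by rewrite /pistar /usort sort_uniq.
move=> pi hpi hupi.
have hp : perm_eq pi (usort u pi) by rewrite perm_sym /usort perm_sort.
apply: le_trans (EU_sorted_max rv ha hp (sort_sorted tot _)) _.
have [e1 hsz1] := bridge rv ha hs huL hL hupi.
have [e2 _] := bridge rv ha hs huL hL huniq.
rewrite /pistar e1 e2 -(take_size xs) hsize main //.
by apply: le_trans (M1 u rv ha L pi) _; rewrite hsz1 hpi.
Qed.
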